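(* Let $\varphi_A(X):=\sum_{i=1}^nA_iXA_i^*$ ($n\in\mathbb N$ or $n=\infty$) be a $w^*$-continuous completely positive linear map on $B(\mathcal H)$, and assume there is a positive operator $X\in B(\mathcal H)$, $X\ne0$, with $\varphi_A(X)\le X$. If one of the following holds, then there is a nontrivial subspace of $\mathcal H$ invariant under every $A_i$, $i=1,\dots,n$: (i) $X$ is not injective; (ii) $X$ is not pure with respect to $\varphi_A$ (i.e. $\varphi_A^k(X)$ does not converge strongly to $0$) and there is $h\in\mathcal H$, $h\ne0$, with $\lim_{k\to\infty}\varphi_A^k(X)h=0$; (iii) $\varphi_A(X)\ne X$ and the orbit of $X$ under $\varphi_A$ has a nonzero fixed point, i.e. there is $h\ne0$ with $\varphi_A^k(X)h=Xh$ for all $k=1,2,\dots$. *)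

(* Defs.v *)
From Stdlib Require Import Reals.
From Coquelicot Require Import Complex.
Open Scope R_scope.

Record HilbertSpace := {
  hcar :> Type;
  hzero : hcar;
  hadd : hcar -> hcar -> hcar;
  hopp : hcar -> hcar;
  hscal : C -> hcar -> hcar;
  hinner : hcar -> hcar -> C;
  hadd_assoc : forall x y z, hadd x (hadd y z) = hadd (hadd x y) z;
  hadd_comm : forall x y, hadd x y = hadd y x;
  hadd_0 : forall x, hadd x hzero = x;
  hadd_opp : forall x, hadd x (hopp x) = hzero;
  hscal_assoc : forall a b x, hscal a (hscal b x) = hscal (Cmult a b) x;
  hscal_1 : forall x, hscal (RtoC 1) x = x;
  hscal_distr_l : forall a x y, hscal a (hadd x y) = hadd (hscal a x) (hscal a y);
  hscal_distr_r : forall a b x, hscal (Cplus a b) x = hadd (hscal a x) (hscal b x);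
  hinner_add : forall x y z, hinner (hadd x y) z = Cplus (hinner x z) (hinner y z);
  hinner_scal : forall a x y, hinner (hscal a x) y = Cmult a (hinner x y);
  hinner_conj : forall x y, hinner x y = Cconj (hinner y x);
  hinner_pos : forall x, 0 <= Re (hinner x x);
  hinner_def : forall x, hinner x x = RtoC 0 -> x = hzero;
  hcomplete : forall u : nat -> hcar,
    (forall eps, 0 < eps -> exists N, forall m n, (N <= m)%nat -> (N <= n)%nat ->
        sqrt (Re (hinner (hadd (u m) (hopp (u n))) (hadd (u m) (hopp (u n))))) < eps) ->
    exists l, forall eps, 0 < eps -> exists N, forall n, (N <= n)%nat ->
        sqrt (Re (hinner (hadd (u n) (hopp l)) (hadd (u n) (hopp l)))) < eps
}.

Arguments hzero {h}.
Arguments hadd {h}.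
Arguments hopp {h}.
Arguments hscal {h}.
Arguments hinner {h}.

Section Ops.
Variable H : HilbertSpace.

Definition hsub (x y : H) : H := hadd x (hopp y).
Definition hnorm (x : H) : R := sqrt (Re (hinner x x)).

Definition hconverges (u : nat -> H) (l : H) : Prop :=
  forall eps, 0 < eps -> exists N, forall n, (N <= n)%nat -> hnorm (hsub (u n) l) < eps.

Fixpoint hpsum (f : nat -> H) (N : nat) : H :=
  match N with
  | O => hzero
  | S N' => hadd (hpsum f N') (f N')
  end.

Definition bounded_op (T : H -> H) : Prop :=
  (forall x y, T (hadd x y) = hadd (T x) (T y)) /\
  (forall a x, T (hscal a x) = hscal a (T x)) /\
  (exists M, forall x, hnorm (T x) <= M * hnorm x).

Definition is_adjoint (T S : H -> H) : Prop :=
  forall x y, hinner (T x) y = hinner x (S y).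

Definition positive_op (T : H -> H) : Prop :=
  bounded_op T /\
  forall h, Im (hinner (T h) h) = 0 /\ 0 <= Re (hinner (T h) h).

Definition op_le (Y X : H -> H) : Prop :=
  forall h, Im (hinner (hsub (X h) (Y h)) h) = 0 /\
            0 <= Re (hinner (hsub (X h) (Y h)) h).

(* Y = phi_A(X) = sum_i A_i X A_i^*, the series converging strongly:
   for every h,  sum_i A_i (X (A_i^* h))  converges in norm to  Y h. *)
Definition is_phi (A Astar : nat -> H -> H) (X Y : H -> H) : Prop :=
  forall h, hconverges (hpsum (fun i => A i (X (Astar i h)))) (Y h).

Definition phi_orbit (A Astar : nat -> H -> H) (X : H -> H) (Xs : nat -> H -> H)
  : Prop :=
  Xs O = X /\ forall k, is_phi A Astar (Xs k) (Xs (S k)).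

Definition closed_subspace (M : H -> Prop) : Prop :=
  M hzero /\
  (forall x y, M x -> M y -> M (hadd x y)) /\
  (forall a x, M x -> M (hscal a x)) /\
  (forall u l, (forall n, M (u n)) -> hconverges u l -> M l).

Definition has_nontrivial_common_invariant_subspace (A : nat -> H -> H) : Prop :=
  exists M : H -> Prop,
    closed_subspace M /\
    (exists x, M x /\ x <> hzero) /\
    (exists y, ~ M y) /\
    (forall i x, M x -> M (A i x)).

End Ops.

Arguments hsub {H}.
Arguments hnorm {H}.
Arguments hconverges {H}.
Arguments hpsum {H}.
Arguments bounded_op {H}.
Arguments is_adjoint {H}.
Arguments positive_op {H}.
Arguments op_le {H}.
Arguments is_phi {H}.
Arguments phi_orbit {H}.
Arguments closed_subspace {H}.
Arguments has_nontrivial_common_invariant_subspace {H}.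

(* Submission.v *)
Require Import Defs.
From Stdlib Require Import Reals Lra Psatz FunctionalExtensionality Classical ClassicalEpsilon.
From Coquelicot Require Import Complex.
Open Scope R_scope.


Section Basics.
Variable H : HilbertSpace.

Definition ri (x y : H) : R := Re (hinner x y).

Lemma hadd_0l (x : H) : hadd hzero x = x.
Proof. rewrite hadd_comm. apply hadd_0. Qed.

Lemma hopp_unique (x y : H) : hadd x y = hzero -> y = hopp x.
Proof.
  intro E. rewrite <- (hadd_0 H y). rewrite <- (hadd_opp H x).
  rewrite hadd_assoc. rewrite (hadd_comm H y x). rewrite E. apply hadd_0l.
Qed.

Lemma hopp_opp (x : H) : hopp (hopp x) = x.
Proof. symmetry. apply hopp_unique. rewrite hadd_comm. apply hadd_opp. Qed.

Lemma hsub_eq0 (u v : H) : hsub u v = hzero -> u = v.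
Proof.
  unfold hsub. intro E. apply hopp_unique in E.
  rewrite <- (hopp_opp u), <- (hopp_opp v), E. reflexivity.
Qed.

Lemma hsub_0 (u : H) : hsub u hzero = u.
Proof.
  unfold hsub. assert (E : hopp (@hzero H) = hzero).
  { symmetry. apply hopp_unique. apply hadd_0. }
  rewrite E. apply hadd_0.
Qed.

Lemma inner_add_l (x y z : H) : hinner (hadd x y) z = Cplus (hinner x z) (hinner y z).
Proof. apply hinner_add. Qed.

Lemma ri_add_l (x y z : H) : ri (hadd x y) z = ri x z + ri y z.
Proof. unfold ri. rewrite hinner_add. reflexivity. Qed.

Lemma ri_zero_l (z : H) : ri hzero z = 0.
Proof.
  assert (E := ri_add_l hzero hzero z). rewrite hadd_0 in E. lra.
Qed.

Lemma ri_opp_l (x z : H) : ri (hopp x) z = - ri x z.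
Proof.
  assert (E := ri_add_l x (hopp x) z). rewrite hadd_opp, ri_zero_l in E. lra.
Qed.

Lemma ri_sub_l (x y z : H) : ri (hsub x y) z = ri x z - ri y z.
Proof. unfold hsub. rewrite ri_add_l, ri_opp_l. ring. Qed.

Lemma ri_sym (x y : H) : ri x y = ri y x.
Proof. unfold ri. rewrite (hinner_conj H x y). destruct (hinner y x). reflexivity. Qed.

Lemma ri_add_r (x y z : H) : ri z (hadd x y) = ri z x + ri z y.
Proof. rewrite !(ri_sym z). apply ri_add_l. Qed.
Lemma ri_zero_r (z : H) : ri z hzero = 0.
Proof. rewrite ri_sym. apply ri_zero_l. Qed.
Lemma ri_sub_r (x y z : H) : ri z (hsub x y) = ri z x - ri z y.
Proof. rewrite !(ri_sym z). apply ri_sub_l. Qed.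

Lemma inner_scal_r (a : C) (x y : H) : hinner x (hscal a y) = Cmult (Cconj a) (hinner x y).
Proof.
  rewrite hinner_conj, hinner_scal, (hinner_conj H y x).
  destruct a as [a1 a2], (hinner x y) as [b1 b2].
  unfold Cconj, Cmult; simpl. f_equal; ring.
Qed.

Lemma inner_scal_move (a : C) (x y : H) : hinner (hscal a x) y = hinner x (hscal (Cconj a) y).
Proof.
  rewrite inner_scal_r, hinner_scal. destruct a as [a1 a2]. unfold Cconj; simpl.
  f_equal. f_equal; ring.
Qed.

Lemma im_self (x : H) : Im (hinner x x) = 0.
Proof.
  assert (E := hinner_conj H x x). destruct (hinner x x) as [a b].
  unfold Cconj in E; simpl in *. injection E. lra.
Qed.

Lemma ri_pos (x : H) : 0 <= ri x x.
Proof. apply hinner_pos. Qed.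

Lemma ri_def (x : H) : ri x x = 0 -> x = hzero.
Proof.
  intro E. apply hinner_def. unfold ri in E. assert (E2 := im_self x).
  destruct (hinner x x) as [a b]. simpl in *. subst. reflexivity.
Qed.

Lemma hext (u v : H) : (forall z, ri u z = ri v z) -> u = v.
Proof.
  intro E. apply hsub_eq0. apply ri_def. rewrite ri_sub_l. rewrite E. ring.
Qed.

Lemma ri_scal_l (a : C) (x y : H) : ri (hscal a x) y = Re (Cmult a (hinner x y)).
Proof. unfold ri. rewrite hinner_scal. reflexivity. Qed.

Lemma ri_rscal_l (t : R) (x y : H) : ri (hscal (RtoC t) x) y = t * ri x y.
Proof. rewrite ri_scal_l. unfold ri. destruct (hinner x y). unfold RtoC, Cmult; simpl. ring. Qed.

Lemma ri_scal_scal (a : C) (w : H) :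
  ri (hscal a w) (hscal a w) = (Re a * Re a + Im a * Im a) * ri w w.
Proof.
  unfold ri. rewrite hinner_scal, inner_scal_r. assert (E := im_self w).
  destruct (hinner w w) as [r s], a as [a1 a2]. simpl in *. subst. ring.
Qed.

Lemma hnorm_sq (x : H) : hnorm x * hnorm x = ri x x.
Proof. unfold hnorm. apply sqrt_sqrt. apply hinner_pos. Qed.

Lemma hnorm_pos (x : H) : 0 <= hnorm x.
Proof. apply sqrt_pos. Qed.

Lemma hnorm_lt (x : H) (e : R) : 0 < e -> (hnorm x < e <-> ri x x < e * e).
Proof.
  intro He. rewrite <- hnorm_sq. assert (P := hnorm_pos x). split; intro; nra.
Qed.

Definition form_ok (q : H -> H -> R) : Prop :=
  (forall x1 x2 y, q (hadd x1 x2) y = q x1 y + q x2 y) /\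
  (forall t x y, q (hscal (RtoC t) x) y = t * q x y) /\
  (forall x y, q x y = q y x) /\
  (forall x, 0 <= q x x).

Lemma discr (a b c : R) : 0 <= a -> (forall t, 0 <= c + 2 * b * t + a * t * t) -> b * b <= c * a.
Proof.
  intros Ha Ht. destruct (Req_dec a 0) as [E|E].
  - subst. destruct (Req_dec b 0) as [Eb|Eb]. subst; lra.
    specialize (Ht (- (c + 1) / (2 * b))).
    replace (c + 2 * b * (- (c + 1) / (2 * b)) + 0 * (- (c + 1) / (2 * b)) * (- (c + 1) / (2 * b))) with (-1) in Ht by (field; lra). lra.
  - specialize (Ht (- b / a)). assert (0 < a) by lra.
    assert (c + 2 * b * (- b / a) + a * (- b / a) * (- b / a) = c - b * b / a) by (field; lra).
    rewrite H1 in Ht. apply Rmult_le_reg_r with (/ a). apply Rinv_0_lt_compat; lra.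
    replace (c * a * / a) with c by (field; lra). unfold Rdiv in Ht. lra.
Qed.

Lemma cs (q : H -> H -> R) : form_ok q -> forall x y, q x y * q x y <= q x x * q y y.
Proof.
  intros [qa [qs [qy qp]]] x y. apply discr. apply qp. intro t.
  assert (E : q (hadd x (hscal (RtoC t) y)) (hadd x (hscal (RtoC t) y)) =
              q x x + 2 * q x y * t + q y y * t * t).
  { rewrite qa, qs. rewrite (qy x), (qy y). rewrite !qa, !qs. rewrite (qy y x). ring. }
  rewrite <- E. apply qp.
Qed.

Lemma ri_form : form_ok ri.
Proof.
  split; [|split; [|split]]. apply ri_add_l. apply ri_rscal_l. apply ri_sym. apply ri_pos.
Qed.

Lemma ri_cs (x y : H) : Rabs (ri x y) <= hnorm x * hnorm y.
Proof.
  assert (C := cs ri ri_form x y). rewrite <- !hnorm_sq in C.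
  assert (P1 := hnorm_pos x). assert (P2 := hnorm_pos y).
  assert (P3 : 0 <= hnorm x * hnorm y) by nra.
  destruct (Rabs_pos (ri x y)); unfold Rabs in *; destruct (Rcase_abs (ri x y)); nra.
Qed.
End Basics.


Section Lim.
Variable H : HilbertSpace.

Lemma cv_const (c : R) : Un_cv (fun _ => c) c.
Proof. intros e He. exists O. intros. unfold Rdist. replace (c - c) with 0 by ring. rewrite Rabs_R0. lra. Qed.

Lemma ri_cont (u : nat -> H) (l z : H) : hconverges u l -> Un_cv (fun n => ri H (u n) z) (ri H l z).
Proof.
  intros Hc e He.
  assert (Hz := hnorm_pos H z).
  destruct (Hc (e / (hnorm z + 1))) as [N HN].
  { apply Rdiv_lt_0_compat; lra. }
  exists N. intros n Hn. unfold Rdist.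
  replace (ri H (u n) z - ri H l z) with (ri H (hsub (u n) l) z) by (rewrite ri_sub_l; ring).
  eapply Rle_lt_trans. apply ri_cs.
  specialize (HN n Hn). assert (Hp := hnorm_pos H (hsub (u n) l)).
  apply Rle_lt_trans with (e / (hnorm z + 1) * hnorm z).
  apply Rmult_le_compat_r; lra.
  apply Rlt_le_trans with (e / (hnorm z + 1) * (hnorm z + 1)).
  apply Rmult_lt_compat_l. apply Rdiv_lt_0_compat; lra. lra.
  right. field. lra.
Qed.

Lemma hlim_unique (u : nat -> H) (l l' : H) : hconverges u l -> hconverges u l' -> l = l'.
Proof.
  intros H1 H2. apply hext. intro z. eapply UL_sequence; apply ri_cont; eassumption.
Qed.

Lemma hconv0 (u : nat -> H) :
  (forall e, 0 < e -> exists N, forall n, (N <= n)%nat -> ri H (u n) (u n) < e) ->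
  hconverges u hzero.
Proof.
  intros Hc e He. destruct (Hc (e * e)) as [N HN]. nra. exists N. intros n Hn.
  rewrite hsub_0. apply hnorm_lt; auto.
Qed.

Lemma hconv0_inv (u : nat -> H) : hconverges u hzero ->
  (forall e, 0 < e -> exists N, forall n, (N <= n)%nat -> ri H (u n) (u n) < e).
Proof.
  intros Hc e He. destruct (Hc (sqrt e)) as [N HN]. apply sqrt_lt_R0; auto.
  exists N. intros n Hn. specialize (HN n Hn). rewrite hsub_0 in HN.
  apply hnorm_lt in HN. rewrite sqrt_sqrt in HN; lra. apply sqrt_lt_R0; auto.
Qed.

Fixpoint rsum (f : nat -> R) (N : nat) : R :=
  match N with O => 0 | S N' => rsum f N' + f N' end.

Lemma ri_hpsum (f : nat -> H) N z : ri H (hpsum f N) z = rsum (fun i => ri H (f i) z) N.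
Proof. induction N; simpl. apply ri_zero_l. rewrite ri_add_l, IHN. reflexivity. Qed.

Lemma rsum_ext f g N : (forall i, f i = g i) -> rsum f N = rsum g N.
Proof. intro E. induction N; simpl; auto. rewrite IHN, E. auto. Qed.

Lemma rsum_plus f g N : rsum (fun i => f i + g i) N = rsum f N + rsum g N.
Proof. induction N; simpl. ring. rewrite IHN. ring. Qed.

Lemma rsum_minus f g N : rsum (fun i => f i - g i) N = rsum f N - rsum g N.
Proof. induction N; simpl. ring. rewrite IHN. ring. Qed.

Lemma rsum_nonneg f N : (forall i, 0 <= f i) -> 0 <= rsum f N.
Proof. intro P. induction N; simpl. lra. specialize (P N). lra. Qed.

Lemma rsum_le f g N : (forall i, f i <= g i) -> rsum f N <= rsum g N.
Proof. intro P. induction N; simpl. lra. specialize (P N). lra. Qed.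

Lemma rsum_term f N i : (forall i, 0 <= f i) -> (i < N)%nat -> f i <= rsum f N.
Proof.
  intros P Hi. induction N. lia. simpl. destruct (Nat.eq_dec i N).
  subst. assert (0 <= rsum f N) by (apply rsum_nonneg; auto). lra.
  assert (f i <= rsum f N) by (apply IHN; lia). specialize (P N). lra.
Qed.

Lemma lim_ge (u : nat -> R) (l c : R) (N0 : nat) : Un_cv u l -> (forall n, (N0 <= n)%nat -> c <= u n) -> c <= l.
Proof.
  intros Hc Hle. destruct (Rle_or_lt c l) as [|Hlt]; auto.
  destruct (Hc (c - l)) as [N HN]. lra.
  specialize (HN (max N N0) ltac:(lia)). specialize (Hle (max N N0) ltac:(lia)).
  unfold Rdist in HN. apply Rabs_def2 in HN. lra.
Qed.

Lemma lim_nonneg (u : nat -> R) (l : R) : Un_cv u l -> (forall n, 0 <= u n) -> 0 <= l.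
Proof. intros Hc P. apply (lim_ge u l 0 O); auto. Qed.

Lemma lim_le (u v : nat -> R) (l m : R) : Un_cv u l -> Un_cv v m -> (forall n, u n <= v n) -> l <= m.
Proof. intros. eapply Rle_cv_lim; eauto. Qed.

Lemma term_le_lim (f : nat -> R) (l : R) i : Un_cv (rsum f) l -> (forall i, 0 <= f i) -> f i <= l.
Proof. intros Hc P. apply (lim_ge (rsum f) l (f i) (S i)); auto. intros. apply rsum_term; auto. Qed.

End Lim.


Section Main.
Variable H : HilbertSpace.
Variables A Astar : nat -> H -> H.
Hypothesis hA : forall i, bounded_op (A i).
Hypothesis hAstar : forall i, is_adjoint (A i) (Astar i).
Variable X : H -> H.
Hypothesis hXpos : positive_op X.
Variable Xs : nat -> H -> H.
Hypothesis hXs : phi_orbit A Astar X Xs.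
Hypothesis hsub_harm : op_le (Xs 1%nat) X.

Notation ri := (ri H).

Lemma inner_add_r (x y z : H) : hinner z (hadd x y) = Cplus (hinner z x) (hinner z y).
Proof.
  rewrite hinner_conj, hinner_add, (hinner_conj H z x), (hinner_conj H z y).
  destruct (hinner x z), (hinner y z). unfold Cconj, Cplus; simpl. f_equal; ring.
Qed.

Lemma ri_adj i w z : ri (A i w) z = ri w (Astar i z).
Proof. unfold Submission.ri. rewrite hAstar. reflexivity. Qed.

Lemma astar_add i x y : Astar i (hadd x y) = hadd (Astar i x) (Astar i y).
Proof.
  apply hext. intro z. rewrite ri_add_l, !(ri_sym H _ z), <- !ri_adj, ri_add_r. reflexivity.
Qed.

Lemma astar_scal i a x : Astar i (hscal a x) = hscal a (Astar i x).
Proof.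
  apply hext. intro z. rewrite !(ri_sym H _ z). unfold Submission.ri.
  rewrite <- hAstar, !inner_scal_r, hAstar. reflexivity.
Qed.

Lemma G (T S : H -> H) : is_phi A Astar T S ->
  forall h z, Un_cv (rsum (fun i => ri (T (Astar i h)) (Astar i z))) (ri (S h) z).
Proof.
  intros Hp h z. assert (C := ri_cont H _ _ z (Hp h)).
  eapply Un_cv_ext; [|exact C]. intro N. simpl. rewrite ri_hpsum.
  apply rsum_ext. intro i. apply ri_adj.
Qed.

Definition good (T : H -> H) : Prop :=
  (forall x y, T (hadd x y) = hadd (T x) (T y)) /\
  (forall a x, T (hscal a x) = hscal a (T x)) /\
  (forall x y, ri (T x) y = ri x (T y)) /\
  (forall x, 0 <= ri (T x) x).

Lemma good_form T : good T -> form_ok H (fun x y => ri (T x) y).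
Proof.
  intros [g1 [g2 [g3 g4]]]. split; [|split; [|split]].
  - intros. rewrite g1. apply ri_add_l.
  - intros. rewrite g2. apply ri_rscal_l.
  - intros. rewrite g3. apply ri_sym.
  - auto.
Qed.

Lemma good_step T S : good T -> is_phi A Astar T S -> good S.
Proof.
  intros [g1 [g2 [g3 g4]]] Hp. assert (GG := G T S Hp).
  split; [|split; [|split]].
  - intros x y. apply hext. intro z. rewrite ri_add_l.
    eapply UL_sequence. apply GG.
    eapply Un_cv_ext; [|apply CV_plus; [apply (GG x z)|apply (GG y z)]].
    intro N. simpl. rewrite <- rsum_plus. apply rsum_ext. intro i.
    rewrite astar_add, g1, ri_add_l. reflexivity.
  - intros a x. apply hext. intro z.
    assert (E : ri (hscal a (S x)) z = ri (S x) (hscal (Cconj a) z)).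
    { unfold Submission.ri. rewrite inner_scal_move. reflexivity. }
    rewrite E. eapply UL_sequence. apply GG.
    eapply Un_cv_ext; [|apply (GG x (hscal (Cconj a) z))].
    intro N. simpl. apply rsum_ext. intro i.
    rewrite !astar_scal, g2. unfold Submission.ri. rewrite inner_scal_move. reflexivity.
  - intros x y. rewrite (ri_sym H x). eapply UL_sequence. apply GG.
    eapply Un_cv_ext; [|apply (GG y x)].
    intro N. simpl. apply rsum_ext. intro i. rewrite g3, ri_sym. reflexivity.
  - intro x. apply (lim_nonneg _ _ (GG x x)). intro N. apply rsum_nonneg. intro. apply g4.
Qed.

Lemma X_good : good X.
Proof.
  destruct hXpos as [[b1 [b2 b3]] hp].
  assert (Himz : forall x y, Im (hinner (X x) y) + Im (hinner (X y) x) = 0).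
  { intros x y. assert (E := proj1 (hp (hadd x y))).
    rewrite b1, hinner_add, !inner_add_r in E.
    assert (E1 := proj1 (hp x)). assert (E2 := proj1 (hp y)).
    destruct (hinner (X x) x), (hinner (X x) y), (hinner (X y) x), (hinner (X y) y).
    simpl in *. lra. }
  split; [|split; [|split]]; auto.
  - intros x y. specialize (Himz (hscal Ci x) y). rewrite b2, hinner_scal in Himz.
    rewrite inner_scal_r in Himz. unfold Submission.ri. rewrite (hinner_conj H x (X y)).
    destruct (hinner (X x) y), (hinner (X y) x). simpl in *. lra.
  - intro x. apply hp.
Qed.

Lemma all_good k : good (Xs k).
Proof.
  induction k. rewrite (proj1 hXs). apply X_good.
  eapply good_step. apply IHk. apply (proj2 hXs).
Qed.

Lemma mono k x : ri (Xs (S k) x) x <= ri (Xs k x) x.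
Proof.
  revert x. induction k; intro x.
  - rewrite (proj1 hXs). destruct (hsub_harm x) as [_ P].
    fold (Submission.ri H (hsub (X x) (Xs 1%nat x)) x) in P. rewrite ri_sub_l in P. lra.
  - eapply lim_le. apply (G _ _ (proj2 hXs (S k))). apply (G _ _ (proj2 hXs k)).
    intro N. apply rsum_le. intro i. apply IHk.
Qed.

Lemma mono_le n m x : (n <= m)%nat -> ri (Xs m x) x <= ri (Xs n x) x.
Proof.
  induction 1. lra. eapply Rle_trans. apply mono. auto.
Qed.



Lemma KI0 (q : H -> H -> R) : form_ok H q -> forall x, q x x = 0 -> forall y, q x y = 0.
Proof.
  intros F x E y. assert (C := cs H q F x y). rewrite E in C. nra.
Qed.

Lemma arith1 (s Q c r : R) : 0 <= s -> 0 <= Q -> 0 <= c -> s * s <= Q * r -> r <= c * s -> s <= c * Q.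
Proof.
  intros. destruct (Req_dec s 0) as [Z|Z]. subst. nra.
  assert (s * s <= s * (c * Q)) by nra.
  apply Rmult_le_reg_l with s. lra. lra.
Qed.

Lemma KIq (q : H -> H -> R) (T : H -> H) (c : R) : form_ok H q ->
  (forall x y, q x y = ri (T x) y) -> 0 <= c -> (forall z, q z z <= c * ri z z) ->
  forall x, ri (T x) (T x) <= c * q x x.
Proof.
  intros F E Hc B x. assert (C := cs H q F x (T x)).
  assert (B1 := B (T x)).
  assert (P1 := ri_pos H (T x)). assert (P2 : 0 <= q x x) by apply F.
  rewrite !E in C, B1, P2 |- *.
  apply (arith1 _ _ _ (ri (T (T x)) (T x))); auto. rewrite (E x x), (E (T x) (T x)) in C. exact C.
Qed.

Definition qD n m x y := ri (Xs n x) y - ri (Xs m x) y.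

Lemma qD_ok n m : (n <= m)%nat -> form_ok H (qD n m).
Proof.
  intro Hnm. destruct (all_good n) as [a1 [a2 [a3 a4]]].
  destruct (all_good m) as [b1 [b2 [b3 b4]]].
  unfold qD. split; [|split; [|split]].
  - intros. rewrite a1, b1, !ri_add_l. ring.
  - intros. rewrite a2, b2, !ri_rscal_l. ring.
  - intros. rewrite a3, b3, !(ri_sym H x). reflexivity.
  - intros. assert (M := mono_le n m x Hnm). lra.
Qed.

Lemma good_ok k : form_ok H (fun x y => ri (Xs k x) y).
Proof. apply good_form. apply all_good. Qed.

Lemma hscal_0 a : hscal a (@hzero H) = hzero.
Proof.
  apply hext. intro z. rewrite ri_zero_l.
  assert (E := ri_add_l H (hscal a hzero) (hscal a hzero) z).
  rewrite <- hscal_distr_l, hadd_0 in E. lra.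
Qed.

Lemma main_gen (K : H -> Prop) (T : H -> H) :
  (forall a y, K y -> K (hscal a y)) ->
  (forall i y, K y -> K (Astar i y)) ->
  (exists h, K h /\ h <> hzero) ->
  (forall x y, ri (T x) y = ri x (T y)) ->
  (forall y, K y -> T y = hzero) ->
  (exists z, T z <> hzero) ->
  has_nontrivial_common_invariant_subspace A.
Proof.
  intros Ks Ka [h [Kh hnz]] Th TK [z Tz].
  exists (fun x => forall y, K y -> ri x y = 0).
  split; [|split; [|split]].
  - split; [|split; [|split]].
    + intros. apply ri_zero_l.
    + intros x y Mx My w Kw. rewrite ri_add_l, Mx, My; auto. ring.
    + intros a x Mx w Kw. unfold Submission.ri. rewrite inner_scal_move. apply Mx. auto.
    + intros u l Mu Cu w Kw. eapply UL_sequence. apply (ri_cont H u l w Cu).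
      eapply Un_cv_ext; [|apply (cv_const 0)]. intro n. simpl. rewrite Mu; auto.
  - exists (T z). split; auto. intros y Ky. rewrite Th, TK; auto. apply ri_zero_r.
  - exists h. intro Mh. apply hnz. apply ri_def. auto.
  - intros i x Mx y Ky. rewrite ri_adj; auto.
Qed.

Lemma Xbound : exists c, 0 <= c /\ forall k z, ri (Xs k z) z <= c * ri z z.
Proof.
  destruct hXpos as [[_ [_ [M HM]]] _]. exists (Rmax M 0). split. apply Rmax_r.
  intros k z. eapply Rle_trans. apply (mono_le 0 k z). lia.
  rewrite (proj1 hXs). eapply Rle_trans. apply Rle_abs. eapply Rle_trans. apply ri_cs.
  rewrite <- hnorm_sq. assert (P := hnorm_pos H z). assert (P2 := hnorm_pos H (X z)).
  specialize (HM z). assert (M <= Rmax M 0) by apply Rmax_l. nra.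
Qed.

Lemma nz_fun (F G : H -> H) : F <> G -> exists z, F z <> G z.
Proof.
  intro N. apply NNPP. intro N2. apply N. apply functional_extensionality. intro z.
  apply NNPP. intro N3. apply N2. exists z. auto.
Qed.

Lemma case_i : X <> (fun _ => hzero) -> (exists h : H, h <> hzero /\ X h = hzero) ->
  has_nontrivial_common_invariant_subspace A.
Proof.
  intros hXnz [h [hnz Xh]].
  destruct (X_good) as [g1 [g2 [g3 g4]]].
  apply (main_gen (fun y => X y = hzero) X).
  - intros a y Ky. rewrite g2, Ky. apply hscal_0.
  - intros i y Ky.
    assert (T0 : ri (X (Astar i y)) (Astar i y) <= ri (Xs 1%nat y) y).
    { assert (GG := G _ _ (proj2 hXs 0%nat) y y). rewrite (proj1 hXs) in GG.
      apply (term_le_lim _ _ i GG). intro. apply g4. }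
    assert (T1 := mono 0 y). rewrite (proj1 hXs) in T1.
    rewrite Ky, ri_zero_l in T1. assert (T2 := g4 (Astar i y)).
    assert (Z := KI0 _ (good_form X (conj g1 (conj g2 (conj g3 g4)))) (Astar i y) ltac:(simpl; lra)).
    apply hext. intro w. rewrite ri_zero_l. apply Z.
  - exists h; auto.
  - auto.
  - auto.
  - destruct (nz_fun _ _ hXnz) as [z Hz]. exists z. auto.
Qed.

Lemma case_iii : Xs 1%nat <> X -> (exists h : H, h <> hzero /\ forall k, (1 <= k)%nat -> Xs k h = X h) ->
  has_nontrivial_common_invariant_subspace A.
Proof.
  intros Hne [h [hnz Hh]].
  assert (GD := fun k => all_good k).
  destruct (X_good) as [g1 [g2 [g3 g4]]].
  apply (main_gen (fun y => forall k, Xs k y = X y) (fun z => hsub (X z) (Xs 1%nat z))).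
  - intros a y Ky k. destruct (GD k) as [_ [b2 _]]. rewrite b2, Ky, g2. reflexivity.
  - intros i y Ky.
    assert (step : forall k, Xs (S k) (Astar i y) = Xs k (Astar i y)).
    { intro k.
      assert (Ga := G _ _ (proj2 hXs k) y y).
      assert (Gb := G _ _ (proj2 hXs (S k)) y y).
      assert (Gc := CV_minus _ _ _ _ Ga Gb).
      rewrite !Ky in Gc. replace (ri (X y) y - ri (X y) y) with 0 in Gc by ring.
      assert (Z0 : qD k (S k) (Astar i y) (Astar i y) <= 0).
      { apply (term_le_lim (fun j => qD k (S k) (Astar j y) (Astar j y)) 0 i).
        eapply Un_cv_ext; [|exact Gc]. intro N. simpl. rewrite <- rsum_minus. reflexivity.
        intro j. apply (qD_ok k (S k)). lia. }
      assert (Z1 : 0 <= qD k (S k) (Astar i y) (Astar i y)) by (apply (qD_ok k (S k)); lia).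
      assert (Z := KI0 _ (qD_ok k (S k) ltac:(lia)) (Astar i y) ltac:(lra)).
      apply hext. intro w. specialize (Z w). unfold qD in Z. lra. }
    intro k. induction k. rewrite (proj1 hXs). reflexivity. rewrite step. auto.
  - exists h. split; auto. intro k. destruct k. rewrite (proj1 hXs). auto. apply Hh. lia.
  - intros x y. rewrite ri_sub_l, ri_sub_r, g3. destruct (GD 1%nat) as [_ [_ [b3 _]]]. rewrite b3. reflexivity.
  - intros y Ky. rewrite Ky. apply hadd_opp.
  - destruct (nz_fun _ _ Hne) as [z Hz]. exists z. intro E. apply Hz. symmetry. apply hsub_eq0. auto.
Qed.

Lemma sub_sym_norm (a b : H) : ri (hsub a b) (hsub a b) = ri (hsub b a) (hsub b a).
Proof. rewrite !ri_sub_l, !ri_sub_r. rewrite (ri_sym H b a). ring. Qed.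

Lemma case_ii :
  ((~ forall h : H, hconverges (fun k => Xs k h) hzero) /\
     exists h : H, h <> hzero /\ hconverges (fun k => Xs k h) hzero) ->
  has_nontrivial_common_invariant_subspace A.
Proof.
  intros [Hnp [h [hnz Hh]]].
  destruct (Xbound) as [c [Hc Hb]].
  assert (GD := fun k => all_good k).
  assert (SQ : forall n m z, (n <= m)%nat ->
     ri (hsub (Xs n z) (Xs m z)) (hsub (Xs n z) (Xs m z)) <= c * (ri (Xs n z) z - ri (Xs m z) z)).
  { intros n m z Hnm.
    apply (KIq (qD n m) (fun x => hsub (Xs n x) (Xs m x)) c).
    - apply qD_ok; auto.
    - intros. unfold qD. rewrite ri_sub_l. reflexivity.
    - auto.
    - intro w. unfold qD. assert (P := proj2 (proj2 (proj2 (GD m))) w). specialize (Hb n w). lra. }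
  assert (Lex : forall z, exists l, hconverges (fun k => Xs k z) l).
  { intro z. apply hcomplete. intros e He.
    assert (Cr : Cauchy_crit (fun k => ri (Xs k z) z)).
    { apply CV_Cauchy. apply decreasing_cv.
      - intro n. apply mono; auto.
      - exists 0. intros x [n ->]. unfold opp_seq. assert (P := proj2 (proj2 (proj2 (GD n))) z). lra. }
    destruct (Cr (e * e / (c + 1))) as [N HN]. apply Rdiv_lt_0_compat; nra.
    exists N. intros m n Hm Hn. fold (hsub (Xs m z) (Xs n z)). fold (hnorm (hsub (Xs m z) (Xs n z))).
    apply hnorm_lt; auto.
    assert (HNm := HN m n Hm Hn). unfold Rdist in HNm.
    assert (Ee : c * (e * e / (c + 1)) < e * e).
    { apply Rlt_le_trans with ((c + 1) * (e * e / (c + 1))). apply Rmult_lt_compat_r.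
      apply Rdiv_lt_0_compat; nra. lra. right. field. lra. }
    destruct (Nat.le_ge_cases n m) as [Hnm|Hnm].
    - rewrite sub_sym_norm. eapply Rle_lt_trans. apply SQ; auto.
      eapply Rle_lt_trans; [|exact Ee]. apply Rmult_le_compat_l; auto.
      apply Rabs_def2 in HNm. lra.
    - eapply Rle_lt_trans. apply SQ; auto.
      eapply Rle_lt_trans; [|exact Ee]. apply Rmult_le_compat_l; auto.
      apply Rabs_def2 in HNm. lra. }
  set (L := fun z => proj1_sig (constructive_indefinite_description _ (Lex z))).
  assert (LP : forall z, hconverges (fun k => Xs k z) (L z)).
  { intro z. exact (proj2_sig (constructive_indefinite_description _ (Lex z))). }
  clearbody L.
  apply (main_gen (fun y => hconverges (fun k => Xs k y) hzero) L).
  - intros a y Ky. apply hconv0. intros e He.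
    destruct (hconv0_inv H _ Ky (e / (Re a * Re a + Im a * Im a + 1))) as [N HN].
    { apply Rdiv_lt_0_compat; nra. }
    exists N. intros n Hn. destruct (GD n) as [_ [b2 _]]. rewrite b2, ri_scal_scal.
    specialize (HN n Hn). assert (P := ri_pos H (Xs n y)).
    apply Rle_lt_trans with ((Re a * Re a + Im a * Im a + 1) * ri (Xs n y) (Xs n y)). nra.
    apply Rlt_le_trans with ((Re a * Re a + Im a * Im a + 1) * (e / (Re a * Re a + Im a * Im a + 1))).
    apply Rmult_lt_compat_l; nra. right. field. nra.
  - intros i y Ky. apply hconv0. intros e He.
    assert (Hy := hnorm_pos H y).
    destruct (Ky (e / ((c + 1) * (hnorm y + 1)))) as [N HN].
    { apply Rdiv_lt_0_compat; nra. }
    exists N. intros k Hk.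
    assert (K1 := KIq _ (Xs k) c (good_ok k)
                    (fun x y => eq_refl) Hc (Hb k) (Astar i y)).
    simpl in K1.
    assert (K2 : ri (Xs k (Astar i y)) (Astar i y) <= ri (Xs (S k) y) y).
    { apply (term_le_lim (fun j => ri (Xs k (Astar j y)) (Astar j y)) _ i).
      apply (G _ _ (proj2 hXs k)). intro j. apply (GD k). }
    assert (K3 : ri (Xs (S k) y) y <= hnorm (Xs (S k) y) * hnorm y).
    { eapply Rle_trans. apply Rle_abs. apply ri_cs. }
    specialize (HN (S k) ltac:(lia)). rewrite hsub_0 in HN.
    assert (P := hnorm_pos H (Xs (S k) y)).
    set (d := e / ((c + 1) * (hnorm y + 1))) in *.
    assert (Ed : d * ((c + 1) * (hnorm y + 1)) = e) by (unfold d; field; nra).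
    assert (hnorm (Xs (S k) y) * hnorm y <= d * (hnorm y + 1)) by nra.
    assert (c * (d * (hnorm y + 1)) < e).
    { rewrite <- Ed. assert (0 < d) by (unfold d; apply Rdiv_lt_0_compat; nra). nra. }
    nra.
  - exists h. auto.
  - intros x y. rewrite (ri_sym H x). eapply UL_sequence. apply (ri_cont H _ _ y (LP x)).
    eapply Un_cv_ext; [|apply (ri_cont H _ _ x (LP y))]. intro k. simpl.
    destruct (GD k) as [_ [_ [b3 _]]]. rewrite b3, ri_sym. reflexivity.
  - intros y Ky. eapply hlim_unique. apply LP. auto.
  - destruct (not_all_ex_not _ _ Hnp) as [z Hz]. exists z. intro E. apply Hz.
    rewrite <- E. apply LP.
Qed.
End Main.

Theorem theorem4p3
  (H : HilbertSpace)
  (A Astar : nat -> H -> H)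
  (hA : forall i, bounded_op (A i))
  (hAstar : forall i, is_adjoint (A i) (Astar i))
  (* w*-continuity of phi_A: sum_i A_i A_i^* converges strongly, i.e. its
     partial sums are uniformly bounded *)
  (hwstar : exists M, forall (N : nat) (h : H),
      hnorm (hpsum (fun i => A i (Astar i h)) N) <= M * hnorm h)
  (X : H -> H)
  (hXpos : positive_op X)
  (hXnz : X <> (fun _ => hzero))
  (Xs : nat -> H -> H)
  (hXs : phi_orbit A Astar X Xs)
  (hsub_harm : op_le (Xs 1%nat) X) :
  ( (* (i) X is not injective *)
    (exists h : H, h <> hzero /\ X h = hzero)
    \/
    (* (ii) X is not pure, but phi^k(X) h -> 0 for some h <> 0 *)
    ((~ forall h : H, hconverges (fun k => Xs k h) hzero) /\
     exists h : H, h <> hzero /\ hconverges (fun k => Xs k h) hzero)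
    \/
    (* (iii) phi(X) <> X, and the orbit of X has a nonzero common fixed vector *)
    (Xs 1%nat <> X /\
     exists h : H, h <> hzero /\ forall k, (1 <= k)%nat -> Xs k h = X h) )
  -> has_nontrivial_common_invariant_subspace A.
Proof.
  intros [C|[C|C]].
  - exact (case_i H A Astar hAstar X hXpos Xs hXs hsub_harm hXnz C).
  - exact (case_ii H A Astar hAstar X hXpos Xs hXs hsub_harm C).
  - exact (case_iii H A Astar hAstar X hXpos Xs hXs hsub_harm (proj1 C) (proj2 C)).
Qed.
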